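(* Assume $\tau_1+\tau_2=1$ and set $A_1=L$, $A_2=M$, $A_3=[A_1,A_2]$. Then, as identities of differential operators, $$[A_2,A_3]=\alpha_1\{A_1,A_2\}+\alpha_2A_2^2+\gamma_1A_1+\delta A_2+\epsilon_1,\qquad [A_3,A_1]=\alpha_2\{A_1,A_2\}+\alpha_1A_1^2+\gamma_2A_2+\delta A_1+\epsilon_2,$$ with $\alpha_1=-2$, $\alpha_2=2$, $\delta=\alpha(\alpha+\beta+1)+\beta-4\tau_0-2\tau_3$, $\gamma_1=1-\alpha^2+4(\tau_0+\tau_2-\tau_2^2)$, $\gamma_2=-(\alpha+\beta)(\alpha+\beta+2)$, $\epsilon_1=2\tau_0^2+(1-\alpha^2)\tau_3+2\tau_0\tau_3+2(\alpha+1)(\beta+1)(\tau_2^2-\tau_2)-(\alpha+1)(\alpha+\beta)\tau_0$, and $\epsilon_2=(\alpha+\beta)\big((\alpha+\beta+2)\tau_0+(\alpha+1)\tau_3\big)$.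
   Context: $L=x(1-x)\partial_x^2+\big(\alpha+1-(\alpha+\beta+2)x\big)\partial_x$ with real $\alpha,\beta$, $X$ is multiplication by $x$, and $M=\tau_1XL+\tau_2LX+\tau_3X+\tau_0$ with real $\tau_0,\tau_1,\tau_2,\tau_3$. $[a,b]=ab-ba$ and $\{a,b\}=ab+ba$; constants denote multiples of the identity. *)

(* Defs.v *)
(* Differential operators with polynomial coefficients are
   modelled by their (faithful, in characteristic 0) action on polynomials
   {poly R}; operator identities are stated as equalities of these maps. *)
From HB Require Import structures.
From mathcomp Require Import all_boot all_order all_algebra.
Set Implicit Arguments. Unset Strict Implicit. Unset Printing Implicit Defensive.
Import Order.TTheory GRing.Theory Num.Theory.
Local Open Scope ring_scope.

Definition op (R : realFieldType) := {poly R} -> {poly R}.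

Definition Lop (R : realFieldType) (a b : R) : op R := fun p =>
  'X * (1 - 'X) * p^`(2) + ((a + 1)%:P - (a + b + 2) *: 'X) * p^`().

Definition Xop (R : realFieldType) : op R := fun p => 'X * p.

Definition Mop (R : realFieldType) (a b t0 t1 t2 t3 : R) : op R := fun p =>
  t1 *: Xop (Lop a b p) + t2 *: Lop a b (Xop p) + t3 *: Xop p + t0 *: p.

Definition opadd (R : realFieldType) (A B : op R) : op R := fun p => A p + B p.
Definition opscale (R : realFieldType) (c : R) (A : op R) : op R := fun p => c *: A p.
Definition opmul (R : realFieldType) (A B : op R) : op R := fun p => A (B p).
Definition opconst (R : realFieldType) (c : R) : op R := fun p => c *: p.
Definition comm (R : realFieldType) (A B : op R) : op R :=
  fun p => A (B p) - B (A p).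
Definition acomm (R : realFieldType) (A B : op R) : op R :=
  fun p => A (B p) + B (A p).

(* Main.v *)
Require Import Defs.
From HB Require Import structures.
From mathcomp Require Import all_boot all_order all_algebra.
From mathcomp Require Import ring.
Import Order.TTheory GRing.Theory Num.Theory.
Local Open Scope ring_scope.
Set Implicit Arguments. Unset Strict Implicit.

Section Alg.
Variable R : realFieldType.
Implicit Types (s t : seq R) (A B U : seq (seq R)) (q r : {poly R}).

Fixpoint ev s : {poly R} := if s is c :: s' then c%:P + 'X * ev s' else 0.
Fixpoint padd s t : seq R :=
  match s, t with [::], _ => t | _, [::] => s | a :: s', b :: t' => (a + b) :: padd s' t' end.
Definition pscale (c : R) s := map (fun x => c * x) s.
Fixpoint pmul s t := if s is a :: s' then padd (pscale a t) (0 :: pmul s' t) else [::].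
Fixpoint pder s := if s is _ :: s' then padd s' (0 :: pder s') else [::].
Fixpoint act A q : {poly R} := if A is a :: A' then ev a * q + act A' q^`() else 0.
Fixpoint oadd A B :=
  match A, B with [::], _ => B | _, [::] => A | a :: A', b :: B' => padd a b :: oadd A' B' end.
Definition omul s A := map (pmul s) A.
Definition oscal (c : R) A := map (pscale c) A.
Fixpoint oder A := if A is a :: A' then pder a :: oadd [:: a] (oder A') else [::].
Fixpoint ocomp U B := if U is u :: U' then oadd (omul u B) (ocomp U' (oder B)) else [::].
Definition osub A B := oadd A (oscal (-1) B).
Fixpoint zl s : Prop := if s is x :: s' then x = 0 /\ zl s' else True.
Fixpoint zA A : Prop := if A is a :: A' then zl a /\ zA A' else True.

Lemma ev_padd s t : ev (padd s t) = ev s + ev t.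
Proof.
elim: s t => [|a s IH] [|b t] /=; rewrite ?add0r ?addr0 //.
rewrite IH polyCD; ring.
Qed.

Lemma ev_pscale c s : ev (pscale c s) = c%:P * ev s.
Proof. elim: s => [|a s IH] /=; rewrite ?mulr0 // IH polyCM; ring. Qed.

Lemma ev_pmul s t : ev (pmul s t) = ev s * ev t.
Proof.
elim: s => [|a s IH] /=; first by rewrite mul0r.
rewrite ev_padd ev_pscale /= IH polyC0; ring.
Qed.

Lemma ev_pder s : ev (pder s) = (ev s)^`().
Proof.
elim: s => [|a s IH] /=; first by rewrite deriv0.
rewrite ev_padd /= IH polyC0 derivD derivC derivM derivX; ring.
Qed.

Lemma act_add A q r : act A (q + r) = act A q + act A r.
Proof.
elim: A q r => [|a A IH] q r /=; first by rewrite addr0.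
rewrite derivD IH; ring.
Qed.

Lemma act_opp A q : act A (- q) = - act A q.
Proof.
elim: A q => [|a A IH] q /=; first by rewrite oppr0.
rewrite derivN IH; ring.
Qed.

Lemma act_sub A q r : act A (q - r) = act A q - act A r.
Proof. by rewrite act_add act_opp. Qed.

Lemma act_oadd A B q : act (oadd A B) q = act A q + act B q.
Proof.
elim: A B q => [|a A IH] [|b B] q /=; rewrite ?add0r ?addr0 //.
rewrite ev_padd IH; ring.
Qed.

Lemma act_oscal c A q : act (oscal c A) q = c *: act A q.
Proof.
elim: A q => [|a A IH] q /=; first by rewrite scaler0.
rewrite ev_pscale IH -!mul_polyC; ring.
Qed.

Lemma act_omul s A q : act (omul s A) q = ev s * act A q.
Proof.
elim: A q => [|a A IH] q /=; first by rewrite mulr0.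
rewrite ev_pmul IH; ring.
Qed.

Lemma act_oder A q : (act A q)^`() = act (oder A) q.
Proof.
elim: A q => [|a A IH] q /=; first by rewrite deriv0.
rewrite derivD derivM IH ev_pder; case: (oder A) => [|b B] /=; rewrite ?ev_padd; ring.
Qed.

Lemma act_ocomp U B q : act (ocomp U B) q = act U (act B q).
Proof.
elim: U B => [|u U IH] B //=.
by rewrite act_oadd act_omul IH act_oder.
Qed.

Lemma act_osub A B q : act (osub A B) q = act A q - act B q.
Proof. by rewrite act_oadd act_oscal scaleN1r. Qed.

Lemma act_c c q : act [:: [:: c]] q = c *: q.
Proof. rewrite /= -mul_polyC; ring. Qed.

Lemma ev_zl s : zl s -> ev s = 0.
Proof. elim: s => [|a s IH] //= [-> /IH ->]; rewrite polyC0; ring. Qed.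

Lemma act_zA A q : zA A -> act A q = 0.
Proof. elim: A q => [|a A IH] q //= [/ev_zl -> /IH ->]; ring. Qed.

Lemma act_eq A B q : zA (osub A B) -> act A q = act B q.
Proof. by move=> /(@act_zA _ q); rewrite act_osub => /eqP; rewrite subr_eq0 => /eqP. Qed.

End Alg.

Definition Ls (R : realFieldType) (a b : R) : seq (seq R) :=
  [:: [::]; [:: a + 1; - (a + b + 2)]; [:: 0; 1; -1]].
Definition Xs (R : realFieldType) : seq (seq R) := [:: [:: 0; 1]].
Definition Ms (R : realFieldType) (a b t0 t1 t2 t3 : R) : seq (seq R) :=
  oadd (oadd (oscal t1 (ocomp (Xs R) (Ls a b))) (oscal t2 (ocomp (Ls a b) (Xs R))))
       (oadd (oscal t3 (Xs R)) [:: [:: t0]]).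

Lemma E_L (R : realFieldType) (a b : R) q : Lop a b q = act (Ls a b) q.
Proof. rewrite /Lop derivSn derivn1 /= polyC0 -mul_polyC; ring. Qed.

Lemma E_X (R : realFieldType) (q : {poly R}) : act (Xs R) q = 'X * q.
Proof. rewrite /= polyC0 polyC1; ring. Qed.

Lemma E_M (R : realFieldType) (a b t0 t1 t2 t3 : R) q :
  Mop a b t0 t1 t2 t3 q = act (Ms a b t0 t1 t2 t3) q.
Proof.
rewrite /Ms !act_oadd !act_oscal !act_ocomp !E_X act_c /Mop /Xop !E_L.
by rewrite addrA.
Qed.

Definition Ms2 (R : realFieldType) (a b t0 t2 t3 : R) : seq (seq R) :=
  [:: [:: t2 + t0 + a * t2; t3 - 2 * t2 - b * t2 - a * t2];
      [:: 0; 1 + 2 * t2 + a; -2 - 2 * t2 - b - a];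
      [:: 0; 0; 1; -1]].

Lemma E_M2 (R : realFieldType) (a b t0 t2 t3 : R) q :
  Mop a b t0 (1 - t2) t2 t3 q = act (Ms2 a b t0 t2 t3) q.
Proof. rewrite E_M; apply: act_eq; rewrite /Ms /=; repeat split; ring. Qed.

Unset Implicit Arguments.

Theorem mainTheorem8 (R : realFieldType) (alpha beta t0 t1 t2 t3 : R) :
  t1 + t2 = 1 ->
  let A1 := Lop alpha beta in
  let A2 := Mop alpha beta t0 t1 t2 t3 in
  let A3 := comm A1 A2 in
  let a1 : R := -2 in
  let a2 : R := 2 in
  let delta := alpha * (alpha + beta + 1) + beta - 4 * t0 - 2 * t3 in
  let g1 := 1 - alpha ^+ 2 + 4 * (t0 + t2 - t2 ^+ 2) in
  let g2 := - ((alpha + beta) * (alpha + beta + 2)) in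
  let e1 := 2 * t0 ^+ 2 + (1 - alpha ^+ 2) * t3 + 2 * t0 * t3
            + 2 * (alpha + 1) * (beta + 1) * (t2 ^+ 2 - t2)
            - (alpha + 1) * (alpha + beta) * t0 in
  let e2 := (alpha + beta) * ((alpha + beta + 2) * t0 + (alpha + 1) * t3) in
  (forall p : {poly R},
     comm A2 A3 p =
       a1 *: acomm A1 A2 p + a2 *: A2 (A2 p) + g1 *: A1 p + delta *: A2 p
       + e1 *: p) /\
  (forall p : {poly R},
     comm A3 A1 p =
       a2 *: acomm A1 A2 p + a1 *: A1 (A1 p) + g2 *: A2 p + delta *: A1 p
       + e2 *: p).
Proof.
move=> h; cbv zeta.
rewrite (_ : t1 = 1 - t2); last by rewrite -h addrK.
split=> p.
all: rewrite /comm /acomm /= !E_M2 !E_L.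
all: rewrite ?act_sub -!act_ocomp -!act_oscal -[_ *: p]act_c -!act_osub -!act_oadd.
all: rewrite -?act_oscal -?act_osub -?act_oadd.
all: apply: act_eq.
all: simpl.
all: repeat split.
all: ring.
Qed.
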